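(* Let $\mathcal{K}$ be a 2-category. The assignment sending a monad $(X,S,m,s)$ to the relative monad $(X,1_X,S)$ with unit $s$ and extension $f\mapsto mB\cdot Sf$ (for $f\colon A\Rightarrow SB$), a 1-cell $(F,\phi)$ to $(F,F,\phi)$ and a 2-cell $p$ to $(p,p)$, defines a 2-functor $\mathbf{Mnd}(\mathcal{K}^{op})^{op}\to\mathbf{Rmd}(\mathcal{K})$ which is injective on objects, whose image on objects is exactly the relative monads $(X,I,S)$ with $X_0=X$ and $I=1_X$, and which is an isomorphism on every hom-category. Thus $\mathbf{Mnd}(\mathcal{K}^{op})^{op}$ is a full, locally full sub-2-category of $\mathbf{Rmd}(\mathcal{K})$.
   Context: Conventions: 1-cells compose by juxtaposition; vertical composition of 2-cells is written $\cdot$; whiskering by juxtaposition. $\mathbf{Mnd}(\mathcal{K}^{op})^{op}$: objects are monads $(X,S,m,s)$ in $\mathcal{K}$; a 1-cell $(X,S)\to(Y,T)$ (with $T$ having multiplication $n$ and unit $t$) is a pair $(F,\phi)$ with $F\colon X\to Y$ and $\phi\colon FS\Rightarrow TF$ such that $\phi\cdot Fs=tF$ and $\phi\cdot Fm=nF\cdot T\phi\cdot\phi S$; a 2-cell $(F,\phi)\Rightarrow(F',\phi')$ is $p\colon F\Rightarrow F'$ with $\phi'\cdot pS=Tp\cdot\phi$. Operator: given 1-cells $F\colon X\to Z$, $G\colon Y\to Z$, $F'\colon X\to Z'$, $G'\colon Y\to Z'$, an operator $(-)^\#\colon[F,G]\to[F',G']$ is a family of functions, indexed by spans $A\colon O\to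 X$, $B\colon O\to Y$, $(-)^\#_{A,B}\colon\mathcal{K}[O,Z](FA,GB)\to\mathcal{K}[O,Z'](F'A,G'B)$, with $(fP)^\#=f^\#P$, $(f\cdot F\alpha)^\#=f^\#\cdot F'\alpha$, $(G\beta\cdot f)^\#=G'\beta\cdot f^\#$ for all 1-cells $P\colon O'\to O$ and 2-cells $\alpha\colon A'\Rightarrow A$, $\beta\colon B\Rightarrow B'$. Relative monad: a relative monad $(X,I,S)$ in $\mathcal{K}$ consists of objects $X_0,X$, 1-cells $I,S\colon X_0\to X$, an operator $(-)^\dagger=(-)^\dagger_S\colon[I,S]\to[S,S]$ (extension) and a 2-cell $s\colon I\Rightarrow S$ (unit) such that for all 1-cells $A,B,C\colon O\to X_0$ and 2-cells $k\colon IA\Rightarrow SB$, $l\colon IB\Rightarrow SC$: $k^\dagger\cdot sA=k$; $(sA)^\dagger=1_{SA}$; $(l^\dagger\cdot k)^\dagger=l^\dagger\cdot k^\dagger$. $\mathbf{Rmd}(\mathcal{K})$: a relative monad morphism $(F,F_0,\phi)\colon(X,I,S)\to(Y,J,T)$ (with $I\colon X_0\to X$, $J\colon Y_0\to Y$, units $s,t$) consists of 1-cells $F\colon X\to Y$, $F_0\colon X_0\to Y_0$ with $FI=JF_0$ and a 2-cell $\phi\colon FS\Rightarrow TF_0$ such that $\phi\cdot Fs=tF_0$ and, for all $A,B\colon O\to X_0$ and $k\colon IA\Rightarrow SB$, $\phi B\cdot F(k^\dagger_S)=(\phi B\cdot Fk)^\dagger_T\cdot\phi A$. A relative monad transformation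 $(p,p_0)\colon(F,F_0,\phi)\Rightarrow(F',F'_0,\phi')$ consists of 2-cells $p\colon F\Rightarrow F'$, $p_0\colon F_0\Rightarrow F'_0$ with $Jp_0=pI$ and $\phi'\cdot pS=Tp_0\cdot\phi$. These form a 2-category $\mathbf{Rmd}(\mathcal{K})$; the composite of $(F,F_0,\phi)$ followed by $(G,G_0,\gamma)$ is $(GF,G_0F_0,\gamma F_0\cdot G\phi)$, identities are $(1_X,1_{X_0},1_S)$, 2-cells compose componentwise. Full sub-2-category: a 2-functor $J\colon\mathcal{K}\to\mathcal{L}$ exhibits a full sub-2-category if each $J_{x,y}\colon\mathcal{K}(x,y)\to\mathcal{L}(Jx,Jy)$ is an equivalence. *)

(* Defs.v *)
(** * Strict 2-categories.
    1-cells are typed by their source/target objects; 2-cells between 1-cells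
    x -> y form a single type [cell x y] equipped with domain/codomain
    1-cells (a "single-sorted" presentation of each hom-category). This
    avoids transport along the strict equalities of 1-cells. Composition of
    2-cells is total; the axioms only constrain composable pairs.
    [comp1 G F] is the composite "G F" (first F, then G);
    [vcomp b a] is "b . a" (first a, then b);
    [hcomp b a] is the horizontal composite "b a" (b after a). *)
Record TwoCat : Type := MkTwoCat {
  obj : Type;
  hom : obj -> obj -> Type;
  cell : obj -> obj -> Type;
  id1 : forall x, hom x x;
  comp1 : forall x y z, hom y z -> hom x y -> hom x z;
  dom2 : forall x y, cell x y -> hom x y;
  cod2 : forall x y, cell x y -> hom x y;
  id2 : forall x y, hom x y -> cell x y;
  vcomp : forall x y, cell x y -> cell x y -> cell x y;
  hcomp : forall x y z, cell y z -> cell x y -> cell x z;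
  comp1_assoc : forall x y z w (H : hom z w) (G : hom y z) (F : hom x y),
      comp1 _ _ _ H (comp1 _ _ _ G F) = comp1 _ _ _ (comp1 _ _ _ H G) F;
  comp1_idl : forall x y (F : hom x y), comp1 _ _ _ (id1 y) F = F;
  comp1_idr : forall x y (F : hom x y), comp1 _ _ _ F (id1 x) = F;
  dom2_id2 : forall x y (F : hom x y), dom2 _ _ (id2 _ _ F) = F;
  cod2_id2 : forall x y (F : hom x y), cod2 _ _ (id2 _ _ F) = F;
  dom2_vcomp : forall x y (a b : cell x y), cod2 _ _ a = dom2 _ _ b ->
      dom2 _ _ (vcomp _ _ b a) = dom2 _ _ a;
  cod2_vcomp : forall x y (a b : cell x y), cod2 _ _ a = dom2 _ _ b ->
      cod2 _ _ (vcomp _ _ b a) = cod2 _ _ b;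
  vcomp_assoc : forall x y (a b c : cell x y),
      cod2 _ _ a = dom2 _ _ b -> cod2 _ _ b = dom2 _ _ c ->
      vcomp _ _ c (vcomp _ _ b a) = vcomp _ _ (vcomp _ _ c b) a;
  vcomp_idl : forall x y (a : cell x y), vcomp _ _ (id2 _ _ (cod2 _ _ a)) a = a;
  vcomp_idr : forall x y (a : cell x y), vcomp _ _ a (id2 _ _ (dom2 _ _ a)) = a;
  dom2_hcomp : forall x y z (b : cell y z) (a : cell x y),
      dom2 _ _ (hcomp _ _ _ b a) = comp1 _ _ _ (dom2 _ _ b) (dom2 _ _ a);
  cod2_hcomp : forall x y z (b : cell y z) (a : cell x y),
      cod2 _ _ (hcomp _ _ _ b a) = comp1 _ _ _ (cod2 _ _ b) (cod2 _ _ a);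
  hcomp_assoc : forall x y z w (c : cell z w) (b : cell y z) (a : cell x y),
      hcomp _ _ _ c (hcomp _ _ _ b a) = hcomp _ _ _ (hcomp _ _ _ c b) a;
  hcomp_idl : forall x y (a : cell x y), hcomp _ _ _ (id2 _ _ (id1 y)) a = a;
  hcomp_idr : forall x y (a : cell x y), hcomp _ _ _ a (id2 _ _ (id1 x)) = a;
  hcomp_id2 : forall x y z (G : hom y z) (F : hom x y),
      hcomp _ _ _ (id2 _ _ G) (id2 _ _ F) = id2 _ _ (comp1 _ _ _ G F);
  interchange : forall x y z (a b : cell x y) (c d : cell y z),
      cod2 _ _ a = dom2 _ _ b -> cod2 _ _ c = dom2 _ _ d ->
      hcomp _ _ _ (vcomp _ _ d c) (vcomp _ _ b a)
      = vcomp _ _ (hcomp _ _ _ d b) (hcomp _ _ _ c a)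
}.

Arguments hom {t} _ _.
Arguments cell {t} _ _.
Arguments id1 {t} _.
Arguments comp1 {t x y z} _ _.
Arguments dom2 {t x y} _.
Arguments cod2 {t x y} _.
Arguments id2 {t x y} _.
Arguments vcomp {t x y} _ _.
Arguments hcomp {t x y z} _ _.

Definition wl {K : TwoCat} {x y z : obj K} (F : hom y z) (a : cell x y) : cell x z :=
  hcomp (id2 F) a.
Definition wr {K : TwoCat} {x y z : obj K} (a : cell y z) (P : hom x y) : cell x z :=
  hcomp a (id2 P).

Record MonadData (K : TwoCat) : Type := MkMonad {
  mX : obj K; mS : hom mX mX; mm : cell mX mX; ms : cell mX mX }.
Arguments mX {K} _. Arguments mS {K} _. Arguments mm {K} _. Arguments ms {K} _.

Record is_monad {K : TwoCat} (M : MonadData K) : Prop := {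
  mm_dom : dom2 (mm M) = comp1 (mS M) (mS M);
  mm_cod : cod2 (mm M) = mS M;
  ms_dom : dom2 (ms M) = id1 (mX M);
  ms_cod : cod2 (ms M) = mS M;
  m_assoc : vcomp (mm M) (wl (mS M) (mm M)) = vcomp (mm M) (wr (mm M) (mS M));
  m_unitl : vcomp (mm M) (wr (ms M) (mS M)) = id2 (mS M);
  m_unitr : vcomp (mm M) (wl (mS M) (ms M)) = id2 (mS M) }.

(** The extension operator [(-)^dagger : [I,S] -> [S,S]] takes, for every
    span A, B : O -> X0, a 2-cell k : I A => S B (the typing being supplied as
    proof arguments) to a 2-cell S A => S B. *)
Definition ext_type {K : TwoCat} {X0 X : obj K} (I S : hom X0 X) : Type :=
  forall (O : obj K) (A B : hom O X0) (k : cell O X),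
    dom2 k = comp1 I A -> cod2 k = comp1 S B -> cell O X.

Record RelMonadData (K : TwoCat) : Type := MkRelMonad {
  rX0 : obj K; rX : obj K; rI : hom rX0 rX; rS : hom rX0 rX;
  rext : ext_type rI rS; rs : cell rX0 rX }.
Arguments rX0 {K} _. Arguments rX {K} _. Arguments rI {K} _. Arguments rS {K} _.
Arguments rext {K} _ _ _ _ _ _ _. Arguments rs {K} _.

Record is_relmonad {K : TwoCat} (R : RelMonadData K) : Prop := {
  rs_dom : dom2 (rs R) = rI R;
  rs_cod : cod2 (rs R) = rS R;
  rext_dom : forall O (A B : hom O (rX0 R)) k h1 h2,
      dom2 (rext R O A B k h1 h2) = comp1 (rS R) A;
  rext_cod : forall O (A B : hom O (rX0 R)) k h1 h2,
      cod2 (rext R O A B k h1 h2) = comp1 (rS R) B;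
  rext_natP : forall O O' (P : hom O' O) (A B : hom O (rX0 R)) k h1 h2 h1' h2',
      rext R O' (comp1 A P) (comp1 B P) (wr k P) h1' h2'
      = wr (rext R O A B k h1 h2) P;
  rext_natA : forall O (A A' B : hom O (rX0 R)) k (al : cell O (rX0 R)) h1 h2,
      dom2 al = A' -> cod2 al = A -> forall h1' h2',
      rext R O A' B (vcomp k (wl (rI R) al)) h1' h2'
      = vcomp (rext R O A B k h1 h2) (wl (rS R) al);
  rext_natB : forall O (A B B' : hom O (rX0 R)) k (be : cell O (rX0 R)) h1 h2,
      dom2 be = B -> cod2 be = B' -> forall h1' h2',
      rext R O A B' (vcomp (wl (rS R) be) k) h1' h2'
      = vcomp (wl (rS R) be) (rext R O A B k h1 h2);
  rlaw_unitl : forall O (A B : hom O (rX0 R)) k h1 h2,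
      vcomp (rext R O A B k h1 h2) (wr (rs R) A) = k;
  rlaw_unitr : forall O (A : hom O (rX0 R)) h1 h2,
      rext R O A A (wr (rs R) A) h1 h2 = id2 (comp1 (rS R) A);
  rlaw_assoc : forall O (A B C : hom O (rX0 R)) k l hk1 hk2 hl1 hl2 h1 h2,
      rext R O A C (vcomp (rext R O B C l hl1 hl2) k) h1 h2
      = vcomp (rext R O B C l hl1 hl2) (rext R O A B k hk1 hk2) }.

(** * Mnd(K^op)^op : 1-cells and 2-cells. *)
Record MndMor {K : TwoCat} (M M' : MonadData K) : Type := MkMndMor {
  mF : hom (mX M) (mX M'); mphi : cell (mX M) (mX M') }.
Arguments mF {K M M'} _. Arguments mphi {K M M'} _.
Arguments MkMndMor {K M M'} _ _.

Record is_mnd_mor {K : TwoCat} {M M' : MonadData K} (u : MndMor M M') : Prop := {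
  mphi_dom : dom2 (mphi u) = comp1 (mF u) (mS M);
  mphi_cod : cod2 (mphi u) = comp1 (mS M') (mF u);
  mphi_unit : vcomp (mphi u) (wl (mF u) (ms M)) = wr (ms M') (mF u);
  mphi_mult : vcomp (mphi u) (wl (mF u) (mm M))
      = vcomp (wr (mm M') (mF u)) (vcomp (wl (mS M') (mphi u)) (wr (mphi u) (mS M))) }.

Definition is_mnd_tr {K : TwoCat} {M M' : MonadData K} (u v : MndMor M M')
    (p : cell (mX M) (mX M')) : Prop :=
  dom2 p = mF u /\ cod2 p = mF v /\
  vcomp (mphi v) (wr p (mS M)) = vcomp (wl (mS M') p) (mphi u).

Definition mnd_id {K : TwoCat} (M : MonadData K) : MndMor M M :=
  MkMndMor (id1 (mX M)) (id2 (mS M)).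
Definition mnd_comp {K : TwoCat} {M M' M'' : MonadData K}
    (v : MndMor M' M'') (u : MndMor M M') : MndMor M M'' :=
  MkMndMor (comp1 (mF v) (mF u)) (vcomp (wr (mphi v) (mF u)) (wl (mF v) (mphi u))).

Record RmdMor {K : TwoCat} (R R' : RelMonadData K) : Type := MkRmdMor {
  rF : hom (rX R) (rX R'); rF0 : hom (rX0 R) (rX0 R'); rphi : cell (rX0 R) (rX R') }.
Arguments rF {K R R'} _. Arguments rF0 {K R R'} _. Arguments rphi {K R R'} _.
Arguments MkRmdMor {K R R'} _ _ _.

Record is_rmd_mor {K : TwoCat} {R R' : RelMonadData K} (u : RmdMor R R') : Prop := {
  rF_I : comp1 (rF u) (rI R) = comp1 (rI R') (rF0 u);
  rphi_dom : dom2 (rphi u) = comp1 (rF u) (rS R);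
  rphi_cod : cod2 (rphi u) = comp1 (rS R') (rF0 u);
  rphi_unit : vcomp (rphi u) (wl (rF u) (rs R)) = wr (rs R') (rF0 u);
  rphi_ext : forall O (A B : hom O (rX0 R)) k hk1 hk2 h1 h2,
      vcomp (wr (rphi u) B) (wl (rF u) (rext R O A B k hk1 hk2))
      = vcomp (rext R' O (comp1 (rF0 u) A) (comp1 (rF0 u) B)
                  (vcomp (wr (rphi u) B) (wl (rF u) k)) h1 h2)
              (wr (rphi u) A) }.

Record RmdTr {K : TwoCat} (R R' : RelMonadData K) : Type := MkRmdTr {
  rp : cell (rX R) (rX R'); rp0 : cell (rX0 R) (rX0 R') }.
Arguments rp {K R R'} _. Arguments rp0 {K R R'} _.
Arguments MkRmdTr {K R R'} _ _.

Record is_rmd_tr {K : TwoCat} {R R' : RelMonadData K} (u v : RmdMor R R')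
    (c : RmdTr R R') : Prop := {
  rp_dom : dom2 (rp c) = rF u;
  rp_cod : cod2 (rp c) = rF v;
  rp0_dom : dom2 (rp0 c) = rF0 u;
  rp0_cod : cod2 (rp0 c) = rF0 v;
  rp_I : wl (rI R') (rp0 c) = wr (rp c) (rI R);
  rp_phi : vcomp (rphi v) (wr (rp c) (rS R)) = vcomp (wl (rS R') (rp0 c)) (rphi u) }.

Definition rmd_id {K : TwoCat} (R : RelMonadData K) : RmdMor R R :=
  MkRmdMor (id1 (rX R)) (id1 (rX0 R)) (id2 (rS R)).
Definition rmd_comp {K : TwoCat} {R R' R'' : RelMonadData K}
    (v : RmdMor R' R'') (u : RmdMor R R') : RmdMor R R'' :=
  MkRmdMor (comp1 (rF v) (rF u)) (comp1 (rF0 v) (rF0 u))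
           (vcomp (wr (rphi v) (rF0 u)) (wl (rF v) (rphi u))).
Definition rmd_tr_id {K : TwoCat} {R R' : RelMonadData K} (u : RmdMor R R') : RmdTr R R' :=
  MkRmdTr (id2 (rF u)) (id2 (rF0 u)).
Definition rmd_vcomp {K : TwoCat} {R R' : RelMonadData K} (d c : RmdTr R R') : RmdTr R R' :=
  MkRmdTr (vcomp (rp d) (rp c)) (vcomp (rp0 d) (rp0 c)).
Definition rmd_hcomp {K : TwoCat} {R R' R'' : RelMonadData K}
    (d : RmdTr R' R'') (c : RmdTr R R') : RmdTr R R'' :=
  MkRmdTr (hcomp (rp d) (rp c)) (hcomp (rp0 d) (rp0 c)).

Definition J0 {K : TwoCat} (M : MonadData K) : RelMonadData K :=
  MkRelMonad K (mX M) (mX M) (id1 (mX M)) (mS M)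
    (fun O A B k _ _ => vcomp (wr (mm M) B) (wl (mS M) k))
    (ms M).
Definition J1 {K : TwoCat} {M M' : MonadData K} (u : MndMor M M') : RmdMor (J0 M) (J0 M') :=
  MkRmdMor (R:=J0 M) (R':=J0 M') (mF u) (mF u) (mphi u).
Definition J2 {K : TwoCat} {M M' : MonadData K} (p : cell (mX M) (mX M')) : RmdTr (J0 M) (J0 M') :=
  MkRmdTr (R:=J0 M) (R':=J0 M') p p.

(* Main.v *)
Require Import Defs.
From Stdlib Require Import ProofIrrelevance FunctionalExtensionality.

Section H.
Context {K : TwoCat}.

Lemma dwl {x y z : obj K} (F : hom y z) (a : cell x y) : dom2 (wl F a) = comp1 F (dom2 a).
Proof. unfold wl. rewrite dom2_hcomp, dom2_id2. reflexivity. Qed.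
Lemma cwl {x y z : obj K} (F : hom y z) (a : cell x y) : cod2 (wl F a) = comp1 F (cod2 a).
Proof. unfold wl. rewrite cod2_hcomp, cod2_id2. reflexivity. Qed.
Lemma dwr {x y z : obj K} (a : cell y z) (P : hom x y) : dom2 (wr a P) = comp1 (dom2 a) P.
Proof. unfold wr. rewrite dom2_hcomp, dom2_id2. reflexivity. Qed.
Lemma cwr {x y z : obj K} (a : cell y z) (P : hom x y) : cod2 (wr a P) = comp1 (cod2 a) P.
Proof. unfold wr. rewrite cod2_hcomp, cod2_id2. reflexivity. Qed.

Ltac dc := repeat (first
  [ rewrite dwl | rewrite cwl | rewrite dwr | rewrite cwr
  | rewrite dom2_id2 | rewrite cod2_id2 | rewrite dom2_hcomp | rewrite cod2_hcomp
  | rewrite comp1_idl | rewrite comp1_idr | rewrite comp1_assoc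
  | match goal with H : dom2 ?a = _ |- context [dom2 ?a] => rewrite H
                  | H : cod2 ?a = _ |- context [cod2 ?a] => rewrite H end
  | rewrite dom2_vcomp by dc | rewrite cod2_vcomp by dc ]); try reflexivity.

Lemma wl_id {x y z : obj K} (F : hom y z) (G : hom x y) : wl F (id2 G) = id2 (comp1 F G).
Proof. apply hcomp_id2. Qed.
Lemma wr_id {x y z : obj K} (G : hom y z) (P : hom x y) : wr (id2 G) P = id2 (comp1 G P).
Proof. apply hcomp_id2. Qed.
Lemma wl_id1 {x y : obj K} (a : cell x y) : wl (id1 y) a = a.
Proof. apply hcomp_idl. Qed.
Lemma wr_id1 {x y : obj K} (a : cell x y) : wr a (id1 x) = a.
Proof. apply hcomp_idr. Qed.
Lemma id2_vc {x y : obj K} (F : hom x y) : vcomp (id2 F) (id2 F) = id2 F.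
Proof. pose proof (vcomp_idl _ _ _ (id2 F)) as H. rewrite cod2_id2 in H. exact H. Qed.
Lemma vc_idl' {x y : obj K} (a : cell x y) F : cod2 a = F -> vcomp (id2 F) a = a.
Proof. intros <-. apply vcomp_idl. Qed.
Lemma vc_idr' {x y : obj K} (a : cell x y) F : dom2 a = F -> vcomp a (id2 F) = a.
Proof. intros <-. apply vcomp_idr. Qed.
Lemma wl_vc {x y z : obj K} (F : hom y z) (a b : cell x y) :
  cod2 a = dom2 b -> wl F (vcomp b a) = vcomp (wl F b) (wl F a).
Proof. intros. unfold wl. rewrite <- interchange; [rewrite id2_vc; reflexivity | assumption | dc]. Qed.
Lemma wr_vc {x y z : obj K} (P : hom x y) (a b : cell y z) :
  cod2 a = dom2 b -> wr (vcomp b a) P = vcomp (wr b P) (wr a P).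
Proof. intros. unfold wr. rewrite <- interchange; [rewrite id2_vc; reflexivity | dc | assumption]. Qed.
Lemma wl_wl {x y z w : obj K} (F : hom z w) (G : hom y z) (a : cell x y) :
  wl F (wl G a) = wl (comp1 F G) a.
Proof. unfold wl. rewrite hcomp_assoc, hcomp_id2. reflexivity. Qed.
Lemma wr_wr {x y z w : obj K} (a : cell z w) (P : hom y z) (Q : hom x y) :
  wr (wr a P) Q = wr a (comp1 P Q).
Proof. unfold wr. rewrite <- hcomp_assoc, hcomp_id2. reflexivity. Qed.
Lemma wl_wr {x y z w : obj K} (F : hom z w) (a : cell y z) (P : hom x y) :
  wl F (wr a P) = wr (wl F a) P.
Proof. unfold wl, wr. apply hcomp_assoc. Qed.
Lemma exch1 {x y z : obj K} (a : cell x y) (b : cell y z) F' G :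
  cod2 a = F' -> dom2 b = G -> vcomp (wr b F') (wl G a) = hcomp b a.
Proof. intros <- <-. unfold wl, wr. rewrite <- interchange; [|dc|dc].
  rewrite vcomp_idl, vcomp_idr. reflexivity. Qed.
Lemma exch2 {x y z : obj K} (a : cell x y) (b : cell y z) F G' :
  dom2 a = F -> cod2 b = G' -> vcomp (wl G' a) (wr b F) = hcomp b a.
Proof. intros <- <-. unfold wl, wr. rewrite <- interchange; [|dc|dc].
  rewrite vcomp_idl, vcomp_idr. reflexivity. Qed.


Lemma vassoc {x y : obj K} (a b c : cell x y) :
  cod2 a = dom2 b -> cod2 b = dom2 c -> vcomp c (vcomp b a) = vcomp (vcomp c b) a.
Proof. apply vcomp_assoc. Qed.

Lemma part1 (M : MonadData K) : is_monad M -> is_relmonad (J0 M).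
Proof.
  destruct M as [X S m s]; intros [Hmd Hmc Hsd Hsc Ha Hul Hur]; simpl in *.
  constructor; simpl; intros.
  - exact Hsd.
  - exact Hsc.
  - rewrite dom2_vcomp; dc.
  - rewrite cod2_vcomp; dc.
  -
    rewrite wr_vc by dc. rewrite wr_wr, wl_wr. reflexivity.
  -
    rewrite wl_id1. rewrite wl_vc by dc. rewrite vassoc by dc. reflexivity.
  -
    rewrite wl_vc by dc. rewrite wl_wl. rewrite vassoc by dc.
    rewrite (exch1 be m B' (comp1 S S)) by dc.
    rewrite <- (exch2 be m B S) by dc.
    rewrite <- vassoc by dc. reflexivity.
  -
    rewrite comp1_idl in h1.
    rewrite <- vassoc by dc.
    rewrite (exch2 k s A S) by dc.
    rewrite <- (exch1 k s (comp1 S B) (id1 X)) by dc.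
    rewrite wl_id1. rewrite vassoc by dc.
    rewrite <- wr_wr. rewrite <- wr_vc by dc. rewrite Hul, wr_id.
    apply vc_idl'. exact h2.
  -
    rewrite wl_wr. rewrite <- wr_vc by dc. rewrite Hur, wr_id. reflexivity.
  -
    rewrite comp1_idl in hk1, hl1.
    rewrite wl_vc by dc. rewrite wl_vc by dc.
    rewrite wl_wl.
    (* m C . (S m C . (SS l . S k)) = (m C . S l) . (m B . S k) *)
    rewrite (vassoc (wl S k) (wr m B) (vcomp (wr m C) (wl S l))) by dc.
    rewrite <- (vassoc (wr m B) (wl S l) (wr m C)) by dc.
    rewrite (exch2 l m B S) by dc.
    rewrite <- (exch1 l m (comp1 S C) (comp1 S S)) by dc.
    rewrite (vassoc (wl (comp1 S S) l) (wr m (comp1 S C)) (wr m C)) by dc.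
    rewrite (vassoc (wl S k) (vcomp (wl S (wr m C)) (wl (comp1 S S) l)) (wr m C)) by dc.
    rewrite (vassoc (wl (comp1 S S) l) (wl S (wr m C)) (wr m C)) by dc.
    f_equal. f_equal.
    rewrite wl_wr, <- wr_wr, <- !wr_vc by dc. rewrite Ha. reflexivity.
Qed.

Lemma part2 (M M' : MonadData K) (u : MndMor M M') :
  is_monad M -> is_monad M' -> is_mnd_mor u -> is_rmd_mor (J1 u).
Proof.
  destruct M as [X S m s]; intros [Hmd Hmc Hsd Hsc Ha Hul Hur].
  destruct M' as [X' S' m' s']; intros [Hmd' Hmc' Hsd' Hsc' Ha' Hul' Hur'].
  destruct u as [F phi]; intros [Hpd Hpc Hpu Hpm]; simpl in *.
  constructor; simpl; intros.
  - rewrite comp1_idl, comp1_idr. reflexivity.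
  - exact Hpd.
  - exact Hpc.
  - exact Hpu.
  - rewrite comp1_idl in hk1.
    rewrite wl_vc by dc.
    rewrite (vassoc (wl F (wl S k)) (wl F (wr m B)) (wr phi B)) by dc.
    rewrite wl_wr, <- wr_vc by dc. rewrite Hpm.
    rewrite wr_vc by dc. rewrite wr_vc by dc.
    rewrite wl_vc by dc. rewrite wl_wl.
    rewrite !wr_wr, wl_wr, wl_wl.
    rewrite <- !vassoc by dc.
    rewrite (exch1 k phi (comp1 S B) (comp1 F S)) by dc.
    rewrite (exch2 k phi A (comp1 S' F)) by dc.
    reflexivity.
Qed.

Lemma part3 (M M' : MonadData K) (u v : MndMor M M') (p : cell (mX M) (mX M')) :
  is_mnd_tr u v p -> is_rmd_tr (J1 u) (J1 v) (J2 (M:=M) (M':=M') p).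
Proof.
  intros [Hd [Hc Hp]]. constructor; simpl; auto.
  rewrite wl_id1, wr_id1. reflexivity.
Qed.

Definition RM (X : obj K) (S : hom X X) (ext : ext_type (id1 X) S) (s : cell X X) :=
  MkRelMonad K X X (id1 X) S ext s.
Lemma p1 (X : obj K) (S : hom X X) : dom2 (id2 S) = comp1 (id1 X) S.
Proof. dc. Qed.
Lemma p2 (X : obj K) (S : hom X X) : cod2 (id2 S) = comp1 S (id1 X).
Proof. dc. Qed.
Definition mof (X : obj K) (S : hom X X) (ext : ext_type (id1 X) S) :=
  ext X S (id1 X) (id2 S) (p1 X S) (p2 X S).

Lemma ext_cong {X0 X : obj K} {I S : hom X0 X} (ext : ext_type I S) O A A' B B' k k' h1 h2 h1' h2' :
  A = A' -> B = B' -> k = k' -> ext O A B k h1 h2 = ext O A' B' k' h1' h2'.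
Proof. intros; subst. f_equal; apply proof_irrelevance. Qed.

Lemma extF X S ext s (HR : is_relmonad (RM X S ext s)) O A B k h1 h2 :
  ext O A B k h1 h2 = vcomp (wr (mof X S ext) B) (wl S k).
Proof.
  assert (Hd : dom2 k = A) by (rewrite h1, comp1_idl; reflexivity).
  pose proof (rext_natA _ HR O (comp1 S B) A B (id2 (comp1 S B)) k) as NA. simpl in NA.
  assert (q1 : dom2 (id2 (comp1 S B)) = comp1 (id1 X) (comp1 S B)) by dc.
  assert (q2 : cod2 (id2 (comp1 S B)) = comp1 S B) by dc.
  assert (q3 : dom2 (vcomp (id2 (comp1 S B)) (wl (id1 X) k)) = comp1 (id1 X) A) by dc.
  assert (q4 : cod2 (vcomp (id2 (comp1 S B)) (wl (id1 X) k)) = comp1 S B) by dc.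
  specialize (NA q1 q2 Hd h2 q3 q4).
  rewrite (ext_cong ext O A A B B k _ h1 h2 q3 q4 eq_refl eq_refl).
  2:{ rewrite wl_id1, vc_idl'; auto. }
  rewrite NA. f_equal.
  pose proof (rext_natP _ HR X O B S (id1 X) (id2 S) (p1 X S) (p2 X S)) as NP. simpl in NP.
  assert (r1 : dom2 (wr (id2 S) B) = comp1 (id1 X) (comp1 S B)) by dc.
  assert (r2 : cod2 (wr (id2 S) B) = comp1 S (comp1 (id1 X) B)) by dc.
  unfold mof. rewrite <- (NP r1 r2).
  apply ext_cong; [reflexivity | symmetry; apply comp1_idl | symmetry; apply wr_id].
Qed.

Lemma mof_monad X S ext s (HR : is_relmonad (RM X S ext s)) :
  is_monad (MkMonad K X S (mof X S ext) s).
Proof.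
  constructor; simpl.
  - unfold mof. exact (rext_dom _ HR X S (id1 X) _ _ _).
  - unfold mof. rewrite (rext_cod _ HR X S (id1 X) _ _ _). apply comp1_idr.
  - exact (rs_dom _ HR).
  - exact (rs_cod _ HR).
  - assert (Hmd : dom2 (mof X S ext) = comp1 S S) by exact (rext_dom _ HR X S (id1 X) _ _ _).
    assert (Hmc : cod2 (mof X S ext) = S).
    { unfold mof. rewrite (rext_cod _ HR X S (id1 X) _ _ _). apply comp1_idr. }
    assert (q1 : dom2 (mof X S ext) = comp1 (id1 X) (comp1 S S)) by dc.
    assert (q2 : cod2 (mof X S ext) = comp1 S (id1 X)) by dc.
    pose proof (extF X S ext s HR X (comp1 S S) (id1 X) _ q1 q2) as E1.
    rewrite wr_id1 in E1. rewrite <- E1.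
    assert (k1 : dom2 (id2 (comp1 S S)) = comp1 (id1 X) (comp1 S S)) by dc.
    assert (k2 : cod2 (id2 (comp1 S S)) = comp1 S S) by dc.
    assert (q3 : dom2 (vcomp (mof X S ext) (id2 (comp1 S S))) = comp1 (id1 X) (comp1 S S)) by dc.
    assert (q4 : cod2 (vcomp (mof X S ext) (id2 (comp1 S S))) = comp1 S (id1 X)) by dc.
    rewrite (ext_cong ext X _ _ _ _ _ _ q1 q2 q3 q4 eq_refl eq_refl).
    2:{ rewrite vc_idr'; auto. }
    pose proof (rlaw_assoc _ HR X (comp1 S S) S (id1 X) (id2 (comp1 S S)) (id2 S)
                  k1 k2 (p1 X S) (p2 X S) q3 q4) as AS. simpl in AS.
    fold (mof X S ext) in AS. rewrite AS. f_equal.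
    rewrite (extF X S ext s HR). rewrite wl_id, vc_idr'; auto. dc.
  - exact (rlaw_unitl _ HR X S (id1 X) (id2 S) (p1 X S) (p2 X S)).
  - assert (q1 : dom2 s = comp1 (id1 X) (id1 X)) by (pose proof (rs_dom _ HR) as Hs; simpl in Hs; rewrite Hs; dc).
    assert (q2 : cod2 s = comp1 S (id1 X)) by (pose proof (rs_cod _ HR) as Hs; simpl in Hs; rewrite Hs; dc).
    pose proof (extF X S ext s HR X (id1 X) (id1 X) s q1 q2) as E1.
    rewrite wr_id1 in E1. rewrite <- E1.
    assert (q3 : dom2 (wr s (id1 X)) = comp1 (id1 X) (id1 X)) by (rewrite wr_id1; exact q1).
    assert (q4 : cod2 (wr s (id1 X)) = comp1 S (id1 X)) by (rewrite wr_id1; exact q2).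
    pose proof (rlaw_unitr _ HR X (id1 X) q3 q4) as U. simpl in U.
    rewrite comp1_idr in U. rewrite <- U. apply ext_cong; auto. rewrite wr_id1; auto.
Qed.
End H.

Lemma inj_test {K : TwoCat} (M M' : MonadData K) : is_monad M -> is_monad M' -> J0 M = J0 M' -> M = M'.
Proof.
  destruct M as [X S m s], M' as [X' S' m' s']; intros HM HM' H.
  assert (X = X') by exact (f_equal rX0 H). subst X'.
  unfold J0 in H; simpl in H. injection H. intros.
  repeat (apply inj_pair2 in H0). repeat (apply inj_pair2 in H2).
  subst S' s'. repeat (apply inj_pair2 in H1).
  assert (E := f_equal (fun f : ext_type (id1 X) S => f X S (id1 X) (id2 S) (p1 X S) (p2 X S)) H1).
  simpl in E. rewrite !wr_id1, !wl_id in E.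
  rewrite (vc_idr' m) in E by exact (mm_dom _ HM). rewrite (vc_idr' m') in E by exact (mm_dom _ HM'). subst m'. reflexivity.
Qed.

Ltac dc := repeat (first
  [ rewrite dwl | rewrite cwl | rewrite dwr | rewrite cwr
  | rewrite dom2_id2 | rewrite cod2_id2 | rewrite dom2_hcomp | rewrite cod2_hcomp
  | rewrite comp1_idl | rewrite comp1_idr | rewrite comp1_assoc
  | match goal with H : dom2 ?a = _ |- context [dom2 ?a] => rewrite H
                  | H : cod2 ?a = _ |- context [cod2 ?a] => rewrite H end
  | rewrite dom2_vcomp by dc | rewrite cod2_vcomp by dc ]); try reflexivity.

Theorem mainTheorem6 (K : TwoCat) :
  (* J is well defined: objects, 1-cells and 2-cells go to relative monads,
     relative monad morphisms and relative monad transformations *)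
  (forall M : MonadData K, is_monad M -> is_relmonad (J0 M)) /\
  (forall (M M' : MonadData K) (u : MndMor M M'),
      is_monad M -> is_monad M' -> is_mnd_mor u -> is_rmd_mor (J1 u)) /\
  (forall (M M' : MonadData K) (u v : MndMor M M') (p : cell (mX M) (mX M')),
      is_monad M -> is_monad M' -> is_mnd_mor u -> is_mnd_mor v ->
      is_mnd_tr u v p -> is_rmd_tr (J1 u) (J1 v) (J2 (M:=M) (M':=M') p)) /\
  (* J is a 2-functor: it preserves identities and all compositions *)
  (forall M : MonadData K, J1 (mnd_id M) = rmd_id (J0 M)) /\
  (forall (M M' M'' : MonadData K) (u : MndMor M M') (v : MndMor M' M''),
      J1 (mnd_comp v u) = rmd_comp (J1 v) (J1 u)) /\
  (forall (M M' : MonadData K) (u : MndMor M M'),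
      J2 (M:=M) (M':=M') (id2 (mF u)) = rmd_tr_id (J1 u)) /\
  (forall (M M' : MonadData K) (p q : cell (mX M) (mX M')),
      J2 (M:=M) (M':=M') (vcomp q p) = rmd_vcomp (J2 q) (J2 p)) /\
  (forall (M M' M'' : MonadData K) (p : cell (mX M) (mX M')) (q : cell (mX M') (mX M'')),
      J2 (M:=M) (M':=M'') (hcomp q p) = rmd_hcomp (J2 (M:=M') (M':=M'') q) (J2 (M:=M) (M':=M') p)) /\
  (* injective on objects *)
  (forall M M' : MonadData K, is_monad M -> is_monad M' -> J0 M = J0 M' -> M = M') /\
  (* image on objects: exactly the relative monads with X0 = X and I = 1_X *)
  (forall R : RelMonadData K, is_relmonad R ->
      ((exists M : MonadData K, is_monad M /\ J0 M = R) <->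
       exists e : rX0 R = rX R,
         eq_rect (rX0 R) (fun Y => hom Y (rX R)) (rI R) (rX R) e = id1 (rX R))) /\
  (* isomorphism on hom-categories: bijective on 1-cells ... *)
  (forall M M' : MonadData K, is_monad M -> is_monad M' ->
      forall v : RmdMor (J0 M) (J0 M'), is_rmd_mor v ->
        exists! u : MndMor M M', is_mnd_mor u /\ J1 u = v) /\
  (* ... and bijective on 2-cells between any two 1-cells *)
  (forall (M M' : MonadData K) (u v : MndMor M M'),
      is_monad M -> is_monad M' -> is_mnd_mor u -> is_mnd_mor v ->
      forall c : RmdTr (J0 M) (J0 M'), is_rmd_tr (J1 u) (J1 v) c ->
        exists! p : cell (mX M) (mX M'), is_mnd_tr u v p /\ J2 p = c).
Proof.
  split; [exact (@part1 K)|].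
  split; [intros; apply part2; assumption|].
  split; [intros; apply part3; assumption|].
  split; [reflexivity|].
  split; [reflexivity|].
  split; [reflexivity|].
  split; [reflexivity|].
  split; [reflexivity|].
  split; [exact (@inj_test K)|].
  split.
  { intros R HR. split.
    - intros [M [_ <-]]. exists eq_refl. reflexivity.
    - destruct R as [X0 X I S ext s]; simpl. intros [e He]. subst X0. simpl in He. subst I.
      exists (MkMonad K X S (mof X S ext) s). split.
      + apply mof_monad with (s := s). exact HR.
      + unfold J0; simpl. f_equal.
        repeat (apply functional_extensionality_dep; intro).
        symmetry. apply (extF X S ext s HR). }
  split.
  { intros M M' HM HM' v Hv.
    destruct v as [F F0 phi]; destruct Hv as [HI Hd Hc Hu He]; simpl in *.
    rewrite comp1_idl, comp1_idr in HI. subst F0.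
    exists (MkMndMor F phi). split.
    - split; [|reflexivity]. constructor; simpl; auto.
      assert (q1 : dom2 (id2 (mS M)) = comp1 (id1 (mX M)) (mS M)) by dc.
      assert (q2 : cod2 (id2 (mS M)) = comp1 (mS M) (id1 (mX M))) by dc.
      assert (q3 : dom2 (vcomp (wr phi (id1 (mX M))) (wl F (id2 (mS M))))
                   = comp1 (id1 (mX M')) (comp1 F (mS M))) by dc.
      assert (q4 : cod2 (vcomp (wr phi (id1 (mX M))) (wl F (id2 (mS M))))
                   = comp1 (mS M') (comp1 F (id1 (mX M)))) by dc.
      specialize (He (mX M) (mS M) (id1 (mX M)) (id2 (mS M)) q1 q2 q3 q4). simpl in He.
      rewrite !wr_id1, !wl_id in He.
      rewrite (vc_idr' (mm M)) in He by exact (mm_dom _ HM).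
      rewrite (vc_idr' phi) in He by exact Hd.
      rewrite comp1_idr in He. rewrite He.
      pose proof (mm_dom _ HM'). pose proof (mm_cod _ HM'). symmetry; apply vassoc; dc.
    - intros u' [_ Hu']. destruct u'. unfold J1 in Hu'. injection Hu'. intros; subst. reflexivity. }
  { intros M M' u v HM HM' Hu Hv c Hc.
    destruct c as [p p0]; destruct Hc as [Hd Hcd Hd0 Hc0 HI Hphi]; simpl in *.
    rewrite wl_id1, wr_id1 in HI. subst p0.
    exists p. split.
    - split; [split; [|split]; assumption | reflexivity].
    - intros p' [_ Hp']. unfold J2 in Hp'. injection Hp'. intros; subst. reflexivity. }
Qed.
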